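(* Let $G=(\mathcal{S},\mathcal{A})$ be a directed acyclic graph (the state graph of a GFlowNet), equipped with a forward policy $P_F(\cdot\mid s)$, a probability distribution on $\mathrm{Child}(s)$ for every state $s$ with nonempty child set, and a backward policy $P_B(\cdot\mid s')$, a probability distribution on the parents of $s'$. Let $\tau=(s_0\to s_1\to\dots\to s_n)$ be a trajectory in $G$ (so $s_{t+1}\in\mathrm{Child}(s_t)$) such that every $s_t$, $0\le t\le n$, has a nonempty child set. Then $$\mathcal{L}_{\mathrm{OT}}(\tau)\le \mathcal{L}_{\mathrm{UB}}(\tau):=\sum_{t=0}^{n-1}\Big[\mathbf{H}\big(P_F(\cdot\mid s_t),P_B^{*}(\cdot\mid s_t)\big)-\log P_F(s_{t+1}\mid s_t)+\mathbf{H}\big(P_F(\cdot\mid s_{t+1})\big)\Big],$$ where all quantities take values in $[0,+\infty]$ (with $-\log 0=+\infty$).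
   Context: For neighbor states $s\to s'$ with $\mathrm{Child}(s)=\{u_1,\dots,u_k\}$ and $\mathrm{Child}(s')=\{v_1,\dots,v_l\}$, define the cost matrix $\mathbf{C}\in[0,\infty]^{k\times l}$ by: $\mathbf{C}_{ij}=0$ if $u_i=v_j$; $\mathbf{C}_{ij}=\min\big(-\log(P_B(s\mid u_i)P_F(s'\mid s)P_F(v_j\mid s')),\,-\log P_F(v_j\mid u_i)\big)$ if $u_i\ne v_j$ and $u_i\to v_j$ is an edge of $G$; and $\mathbf{C}_{ij}=-\log(P_B(s\mid u_i)P_F(s'\mid s)P_F(v_j\mid s'))$ otherwise. The optimal transport distance is $\mathrm{OT}_{\mathbf{C}}(P_F(\cdot\mid s),P_F(\cdot\mid s'))=\min_{\pi\in\Pi}\sum_{i,j}\mathbf{C}_{ij}\pi_{ij}$, where $\Pi=\{\pi\in\mathbb{R}_{+}^{k\times l}:\pi\mathbf{1}_l=P_F(\cdot\mid s),\ \pi^{\top}\mathbf{1}_k=P_F(\cdot\mid s')\}$. The path regularization is $\mathcal{L}_{\mathrm{OT}}(\tau)=\sum_{t=0}^{n-1}\mathrm{OT}_{\mathbf{C}_t}(P_F(\cdot\mid s_t),P_F(\cdot\mid s_{t+1}))$ with $\mathbf{C}_t$ the cost matrix above for the pair $s_t\to s_{t+1}$. The pseudo backward policy at $s$ with children $u_1,\dots,u_k$ is the vector $P_B^{*}(\cdot\mid s)=(P_B^{*}(u_1\mid s),\dots,P_B^{*}(u_k\mid s))$ with $P_B^{*}(u_i\mid s)=P_B(s\mid u_i)$.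 For vectors $p,q$ indexed by $\mathrm{Child}(s)$, $\mathbf{H}(p,q)=-\sum_i p_i\log q_i$ (cross-entropy) and $\mathbf{H}(p)=-\sum_i p_i\log p_i$ (entropy). *)

(* Defs.v *)
From HB Require Import structures.
From mathcomp Require Import all_boot all_order all_algebra.
From mathcomp Require Import all_classical all_reals.
From mathcomp Require Import ereal exp.
Set Implicit Arguments. Unset Strict Implicit. Unset Printing Implicit Defensive.
Import Order.TTheory GRing.Theory Num.Theory.
Local Open Scope ring_scope.
Local Open Scope ereal_scope.

Section GFN.
Variables (R : realType) (T : finType) (E : rel T).

Definition acyclic_graph : Prop := forall x y, E x y -> ~~ connect E y x.

Definition nlog (x : R) : \bar R := if (x <= 0)%R then +oo else (- ln x)%:E.

(* PF s u = P_F(u | s), a probability distribution on Child(s) *)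
Definition forward_policy (PF : T -> T -> R) : Prop :=
  (forall s u, E s u -> (0 <= PF s u)%R) /\
  (forall s, (exists u, E s u) -> (\sum_(u | E s u) PF s u)%R = 1%R).

(* PB s' s = P_B(s | s'), a probability distribution on the parents of s' *)
Definition backward_policy (PB : T -> T -> R) : Prop :=
  (forall s' s, E s s' -> (0 <= PB s' s)%R) /\
  (forall s', (exists s, E s s') -> (\sum_(s | E s s') PB s' s)%R = 1%R).

Variables (PF PB : T -> T -> R).

Definition cost (s s' u v : T) : \bar R :=
  if u == v then 0
  else if E u v then
    Order.min (nlog (PB u s * PF s s' * PF s' v)%R) (nlog (PF u v))
  else nlog (PB u s * PF s s' * PF s' v)%R.

Definition coupling (s s' : T) (pi : T -> T -> R) : Prop :=
  (forall u v, E s u -> E s' v -> (0 <= pi u v)%R) /\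
  (forall u, E s u -> (\sum_(v | E s' v) pi u v)%R = PF s u) /\
  (forall v, E s' v -> (\sum_(u | E s u) pi u v)%R = PF s' v).

Definition OT (s s' : T) : \bar R :=
  ereal_inf [set x | exists pi, coupling s s' pi /\
     x = \sum_(u | E s u) \sum_(v | E s' v) (pi u v)%:E * cost s s' u v].

(* H(P_F(.|s), P_B^*(.|s)) = - sum_i P_F(u_i|s) log P_B(s|u_i) *)
Definition cross_entropy_FB (s : T) : \bar R :=
  \sum_(u | E s u) (PF s u)%:E * nlog (PB u s).

Definition entropy_F (s : T) : \bar R :=
  \sum_(u | E s u) (PF s u)%:E * nlog (PF s u).

(* trajectory tau = (traj 0 -> ... -> traj n) *)
Definition L_OT (n : nat) (traj : nat -> T) : \bar R :=
  \sum_(t < n) OT (traj t) (traj t.+1).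

Definition L_UB (n : nat) (traj : nat -> T) : \bar R :=
  \sum_(t < n) (cross_entropy_FB (traj t) + nlog (PF (traj t) (traj t.+1))
                + entropy_F (traj t.+1)).

End GFN.

(* Main.v *)
Require Import Defs.
From HB Require Import structures.
From mathcomp Require Import all_boot all_order all_algebra.
From mathcomp Require Import all_classical all_reals.
From mathcomp Require Import ereal exp.
Import Order.TTheory GRing.Theory Num.Theory.
Local Open Scope ring_scope.
Local Open Scope ereal_scope.

Section Aux.
Variables (R : realType) (T : finType).

Lemma nlog_ge0 (x : R) : (x <= 1)%R -> 0 <= nlog x.
Proof.
rewrite /nlog => x1; case: ifPn => // _.
by rewrite lee_fin oppr_ge0 ln_le0.
Qed.

Lemma nlog_neq_ninfty (x : R) : nlog x != -oo.
Proof. by rewrite /nlog; case: ifPn. Qed.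

Lemma nlogM (x y : R) : (0 <= x)%R -> (0 <= y)%R -> nlog (x * y) = nlog x + nlog y.
Proof.
move=> x0 y0; rewrite /nlog.
have [xle|xgt] := boolP (x <= 0)%R.
  have -> : x = 0%R by apply/eqP; rewrite eq_le xle x0.
  by rewrite mul0r lexx addye //; case: ifPn.
have [yle|ygt] := boolP (y <= 0)%R.
  have -> : y = 0%R by apply/eqP; rewrite eq_le yle y0.
  by rewrite mulr0 lexx addey.
rewrite -ltNge in xgt; rewrite -ltNge in ygt.
have -> : (x * y <= 0)%R = false by apply/negbTE; rewrite -ltNge mulr_gt0.
by rewrite lnM ?posrE // opprD EFinD.
Qed.

Lemma le1_sum (P : pred T) (F : T -> R) i :
  (forall j, P j -> 0 <= F j)%R -> (\sum_(j | P j) F j = 1)%R -> P i -> (F i <= 1)%R.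
Proof.
move=> F0 F1 Pi; rewrite -F1 (bigD1 i) //= lerDl.
by apply: sumr_ge0 => j /andP[Pj _]; exact: F0.
Qed.

Lemma sum_prob_mul (P : pred T) (q : T -> R) (K : \bar R) :
  (forall j, P j -> 0 <= q j)%R -> (\sum_(j | P j) q j = 1)%R -> 0 <= K ->
  \sum_(j | P j) ((q j)%:E * K) = K.
Proof.
move=> q0 q1 K0; rewrite -ge0_sume_distrl; last by move=> j Pj; rewrite lee_fin q0.
by rewrite sumEFin q1 mul1e.
Qed.

End Aux.

Section Step.
Variables (R : realType) (T : finType) (E : rel T) (PF PB : T -> T -> R).
Hypotheses (hF : forward_policy E PF) (hB : backward_policy E PB).

Lemma step (s s' : T) : E s s' -> (exists u, E s u) -> (exists u, E s' u) ->
  OT E PF PB s s' <= cross_entropy_FB E PF PB s + nlog (PF s s') + entropy_F E PF s'.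
Proof.
move=> ess' cs cs'.
case: hF => F0 F1; case: hB => B0 B1.
have F1s := F1 _ cs; have F1s' := F1 _ cs'.
have Fle1 : forall a b, E a b -> (exists u, E a u) -> (PF a b <= 1)%R.
  by move=> a b eab ca; apply: (@le1_sum _ _ (E a) (PF a)) => //; [exact: F0|exact: F1].
have Ble1 : forall u, E s u -> (PB u s <= 1)%R.
  move=> u esu; apply: (@le1_sum _ _ (fun x => E x u) (PB u)) => //; first exact: B0.
  by apply: B1; exists s.
pose a u := nlog (PB u s); pose B := nlog (PF s s'); pose c v := nlog (PF s' v).
have a0 : forall u, E s u -> 0 <= a u by move=> u esu; apply: nlog_ge0; exact: Ble1.
have B0' : 0 <= B by apply: nlog_ge0; exact: Fle1.
have c0 : forall v, E s' v -> 0 <= c v by move=> v ev; apply: nlog_ge0; exact: Fle1.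
apply: (@le_trans _ _ (\sum_(u | E s u) \sum_(v | E s' v)
    (PF s u * PF s' v)%:E * cost E PF PB s s' u v)).
  apply: ereal_inf_lbound; exists (fun u v => PF s u * PF s' v)%R; split => //.
  split; first by move=> u v eu ev; rewrite mulr_ge0 //; [exact: F0|exact: F0].
  split; first by move=> u eu; rewrite -mulr_sumr F1s' mulr1.
  by move=> v ev; rewrite -mulr_suml F1s mul1r.
apply: (@le_trans _ _ (\sum_(u | E s u) \sum_(v | E s' v)
    (PF s u * PF s' v)%:E * (a u + B + c v))).
  apply: lee_sum => u eu; apply: lee_sum => v ev.
  apply: lee_wpmul2l; first by rewrite lee_fin mulr_ge0 //; [exact: F0|exact: F0].
  have key : nlog (PB u s * PF s s' * PF s' v) = a u + B + c v.
    have h1 : (0 <= PB u s)%R by exact: B0.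
    have h2 : (0 <= PF s s')%R by exact: F0.
    have h3 : (0 <= PF s' v)%R by exact: F0.
    by rewrite nlogM ?mulr_ge0 // nlogM.
  rewrite /cost; case: ifPn => _.
    by rewrite adde_ge0 // ?adde_ge0 //; [exact: a0|exact: c0].
  case: ifPn => _; last by rewrite key.
  by rewrite -key ge_min lexx.
have hq : forall j, E s' j -> (0 <= PF s' j)%R := F0 s'.
have hp : forall j, E s j -> (0 <= PF s j)%R := F0 s.
have pq0 : forall u v, E s u -> E s' v -> 0 <= (PF s u)%:E /\ 0 <= (PF s' v)%:E.
  by move=> u v eu ev; rewrite !lee_fin; split; exact: F0.
have inner : forall u, E s u -> \sum_(v | E s' v) (PF s u * PF s' v)%:E * (a u + B + c v)
   = (PF s u)%:E * a u + (PF s u)%:E * B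
     + (PF s u)%:E * \sum_(v | E s' v) (PF s' v)%:E * c v.
  move=> u eu.
  transitivity (\sum_(v | E s' v) ((PF s' v)%:E * ((PF s u)%:E * a u)
     + (PF s' v)%:E * ((PF s u)%:E * B) + (PF s u)%:E * ((PF s' v)%:E * c v))).
    apply: eq_bigr => v ev; have [p0 q0] := pq0 u v eu ev.
    have := a0 u eu; have := c0 v ev => hc ha.
    rewrite ge0_muleDr ?adde_ge0 // ge0_muleDr // EFinM.
    by rewrite !muleA [(PF s' v)%:E * _]muleC.
  rewrite big_split big_split /=.
  have [p0 _] : 0 <= (PF s u)%:E /\ True by split => //; rewrite lee_fin; exact: F0.
  rewrite sum_prob_mul //; last by rewrite mule_ge0 //; exact: a0.
  rewrite sum_prob_mul //; last by rewrite mule_ge0.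
  rewrite -ge0_sume_distrr //.
  by move=> v ev; rewrite mule_ge0 ?c0 // lee_fin; exact: F0.
rewrite (eq_bigr _ inner) big_split big_split /=.
have K0 : 0 <= \sum_(v | E s' v) (PF s' v)%:E * c v.
  by apply: sume_ge0 => v ev; rewrite mule_ge0 ?c0 // lee_fin; exact: F0.
rewrite (@sum_prob_mul _ _ (fun u => E s u) (PF s)) //.
rewrite -ge0_sume_distrl; last by move=> u eu; rewrite lee_fin hp.
by rewrite sumEFin F1s mul1e.
Qed.

End Step.

Theorem theorem1 (R : realType) (T : finType) (E : rel T)
    (PF PB : T -> T -> R) (n : nat) (traj : nat -> T) :
  acyclic_graph E ->
  forward_policy E PF ->
  backward_policy E PB ->
  (forall t, (t < n)%N -> E (traj t) (traj t.+1)) ->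
  (forall t, (t <= n)%N -> exists u, E (traj t) u) ->
  L_OT E PF PB n traj <= L_UB E PF PB n traj.
Proof.
move=> _ hF hB he hc; rewrite /L_OT /L_UB; apply: lee_sum => i _.
apply: step => //; [exact: he|apply: hc; exact: ltnW|exact: hc].
Qed.
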